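(* Let $G$ be a finite group, let $\pi$ be a set of primes and let $q\in\pi$. Let $\mathcal{S}_{q'}(G_\pi)$ denote the union of all conjugacy classes $g^G$ with $g$ a $\pi$-element of $G$ such that $|g^G|$ is not divisible by $q$. Then $|\mathbf{Z}(G)|_q$ divides $|\mathcal{S}_{q'}(G_\pi)|_q$. Moreover, if $|\mathbf{Z}(G)|_q=|\mathcal{S}_{q'}(G_\pi)|_q$, then $\mathbf{Z}(Q)\le \mathbf{Z}(G)$, where $Q$ is a Sylow $q$-subgroup of $G$.
   Context: A $\pi$-element is an element whose order is divisible only by primes in $\pi$. For a positive integer $n$ and prime $q$, $n_q$ denotes the largest power of $q$ dividing $n$. $|g^G|=|G:C_G(g)|$ is the size of the conjugacy class of $g$; $\mathbf{Z}(\cdot)$ denotes the centre. *)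

(* Defs.v *)
From mathcomp Require Import all_boot all_fingroup all_solvable.
Set Implicit Arguments. Unset Strict Implicit. Unset Printing Implicit Defensive.
Local Open Scope group_scope.

Definition Sqpi (gT : finGroupType) (G : {group gT}) (pi : nat_pred) (q : nat)
  : {set gT} :=
  \bigcup_(x in G | pi.-elt x && ~~ (q %| #|x ^: G|)%N) (x ^: G).

(* Main.v *)
Require Import Defs.
From mathcomp Require Import all_boot all_fingroup all_solvable.
Set Implicit Arguments. Unset Strict Implicit. Unset Printing Implicit Defensive.
Local Open Scope group_scope.

Section Helpers.
Variable gT : finGroupType.
Implicit Types (A B : {set gT}) (G H : {group gT}).

Lemma rcosets_partition_mul_set A H : partition (rcosets H A) (H * A).
Proof.
set HG := H * A; have sGHG: {subset A <= HG} by apply/subsetP/mulG_subr.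
have defHx x: x \in HG -> [set y in HG | rcoset H x == rcoset H y] = H :* x.
  move=> HGx; apply/setP=> y; rewrite inE !rcosetE (sameP eqP rcoset_eqP).
  by rewrite rcoset_sym; apply/andb_idl/subsetP; rewrite mulGS sub1set.
have:= preim_partitionP (rcoset H) HG; congr (partition _ _); apply/setP=> Hx.
apply/imsetP/idP=> [[x HGx ->] | ]; first by rewrite defHx // mem_rcosets.
by case/rcosetsP=> x /sGHG-HGx ->; exists x; rewrite ?defHx.
Qed.

Lemma card_mul_rcosets H A : (#|H| * #|rcosets H A|)%N = #|H * A|.
Proof.
rewrite mulnC -(card_uniform_partition _ (rcosets_partition_mul_set A H)) //.
by move=> _ /rcosetsP[x Hx ->]; rewrite card_rcoset.
Qed.

Lemma mul_stable H A :
  (forall h a, h \in H -> a \in A -> h * a \in A) -> H * A = A.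
Proof.
move=> hA; apply/eqP; rewrite eqEsubset mulG_subr andbT.
by apply/subsetP=> _ /mulsgP[h a Hh Aa ->]; apply: hA.
Qed.

Lemma card_stable H A :
  (forall h a, h \in H -> a \in A -> h * a \in A) ->
  (#|H| * #|rcosets H A|)%N = #|A|.
Proof. by move=> hA; rewrite card_mul_rcosets mul_stable. Qed.

Lemma conj_central (z g : gT) : commute z g -> z ^ g = z.
Proof. by move=> czg; rewrite conjgE czg mulKg. Qed.

Lemma mem_Sqpi G pi q (x : gT) :
  (x \in Sqpi G pi q) = [&& x \in G, pi.-elt x & ~~ (q %| #|x ^: G|)%N].
Proof.
apply/bigcupP/idP => [[y /andP[Gy /andP[piy qy]] /imsetP[g Gg ->]] | /and3P[Gx pix qx]].
  by rewrite groupJ // p_eltJ piy classGidl.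
by exists x; rewrite ?class_refl // Gx pix.
Qed.

Lemma classZ G (z x : gT) : z \in 'Z(G) -> (z * x) ^: G = z *: (x ^: G).
Proof.
case/centerP=> _ cz.
rewrite -lcosetE /lcoset /class -imset_comp; apply: eq_in_imset => g Gg /=.
by rewrite conjMg (conj_central (cz g Gg)).
Qed.

Lemma key G q (z x : gT) : prime q -> z \in 'Z(G) -> q.-elt z ->
  ~~ (q %| #|x ^: G|)%N -> z * x \in x ^: G -> z = 1.
Proof.
move=> qpr Zz qz qx zx.
have Zzn : forall n, z ^+ n \in 'Z(G) by move=> n; rewrite groupX.
have hn : forall n, z ^+ n * x \in x ^: G.
  elim=> [|n IH]; first by rewrite expg0 mul1g class_refl.
  rewrite expgS -mulgA.
  case/imsetP: IH => g Gg ->.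
  have czg : commute z g by case/centerP: Zz => _ cz; exact: cz g Gg.
  rewrite -{1}(conj_central czg) -conjMg.
  have /imsetP[h Gh ->] := zx.
  by rewrite -conjgM memJ_class // groupM.
have : (#|<[z]>| * #|rcosets <[z]> (x ^: G)|)%N = #|x ^: G|.
  apply: card_stable => _ a /cycleP[n ->] /imsetP[g Gg ->].
  have czn : commute (z ^+ n) g by case/centerP: (Zzn n) => _ cz; exact: cz g Gg.
  rewrite -{1}(conj_central czn) -conjMg.
  have /imsetP[h Gh ->] := hn n.
  by rewrite -conjgM memJ_class // groupM.
move=> eq.
have d : (#[z] %| #|x ^: G|)%N by rewrite -eq dvdn_mulr.
have q'n : q^'.-nat #|x ^: G|.
  by rewrite p'natE.
apply/eqP; rewrite -order_eq1; apply/eqP.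
exact: pnat_1 qz (pnat_dvd d q'n).
Qed.

End Helpers.

Theorem theoremC (gT : finGroupType) (G : {group gT}) (pi : nat_pred) (q : nat) :
  prime q -> q \in pi ->
  ((partn #|'Z(G)| q %| partn #|Sqpi G pi q| q)%N /\
   (partn #|'Z(G)| q = partn #|Sqpi G pi q| q ->
    forall Q : {group gT}, Q \in 'Syl_q(G) -> 'Z(Q) \subset 'Z(G))).
Proof.
move=> qpr qpi.
set S := Sqpi G pi q.
have S1 : (1 : gT) \in S.
  rewrite mem_Sqpi group1 p_elt1 class1G cards1 dvdn1 /=.
  by case: eqP qpr => // ->.
have Spos : (0 < #|S|)%N by apply/card_gt0P; exists 1.
have gen : forall Q : {group gT}, q.-Sylow(G) Q ->
  [/\ (#|'Z(G) :&: Q| = #|'Z(G)|`_q)%N, q.-group ('Z(G) :&: Q)%G,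
      forall z x, z \in 'Z(G) :&: Q -> x \in S -> z * x \in S &
      (#|'Z(G) :&: Q| * #|rcosets ('Z(G) :&: Q) S|)%N = #|S|].
  move=> Q sylQ.
  have sylZq := Sylow_setI_normal (center_normal G) sylQ.
  have qZq := pHall_pgroup sylZq.
  have ZqS : forall z x, z \in 'Z(G) :&: Q -> x \in S -> z * x \in S.
    move=> z x Zqz; rewrite !mem_Sqpi => /and3P[Gx pix qx].
    have qz : q.-elt z := mem_p_elt qZq Zqz.
    case/setIP: Zqz => Zz _.
    have Zz' := Zz; case/centerP: Zz => Gz cz.
    rewrite groupM //= classZ // card_lcoset qx andbT.
    apply: p_eltM => //; first exact: cz x Gx.
    exact: pi_pnat qz qpi.
  split=> //; first exact: card_Hall sylZq.
  exact: card_stable ZqS.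
split.
  have [Q sylQ] := Sylow_exists q G.
  have [cardZq qZq ZqS cardS] := gen Q sylQ.
  rewrite -cardZq -(part_pnat_id qZq).
  by apply: partn_dvd Spos _; rewrite -cardS dvdn_mulr.
move=> heq Q; rewrite inE => sylQ.
have [cardZq qZq ZqS cardS] := gen Q sylQ.
set Zq := ('Z(G) :&: Q)%G.
have sQG := pHall_sub sylQ.
have qQ := pHall_pgroup sylQ.
have q'GQ : q^'.-nat #|G : Q| by case/and3P: sylQ.
have sZqA : Zq \subset 'Z(Q).
  apply/subsetP => z /setIP[Zz Qz]; apply/centerP; split=> // y Qy.
  by case/centerP: Zz => _ cz; exact: cz y (subsetP sQG y Qy).
set SC := S :&: 'C(Q).
have ASC : forall a x, a \in 'Z(Q) -> x \in SC -> a * x \in SC.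
  move=> a x /centerP[Qa ca] /setIP[Sx Cx].
  have aC : a \in 'C(Q) by apply/centP => y Qy; exact: ca y Qy.
  have axC : a * x \in 'C(Q) by rewrite groupM.
  rewrite inE axC andbT.
  move: Sx; rewrite !mem_Sqpi => /and3P[Gx pix qx].
  have Ga := subsetP sQG a Qa; rewrite groupM //=.
  apply/andP; split.
    apply: p_eltM => //; last exact: pi_pnat (mem_p_elt qQ Qa) qpi.
    by apply/esym; apply: (centP Cx).
  rewrite -index_cent1 -p'natE //.
  apply: pnat_dvd (indexgS G _) q'GQ.
  by rewrite subsetI sQG sub_cent1.
have cardSC := card_stable ASC.
have cardSCq : (#|Zq| * #|rcosets Zq SC|)%N = #|SC|.
  by apply: card_stable => z x Zqz; apply: ASC; apply: (subsetP sZqA).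
set Y := rcosets Zq S.
have nZq : G \subset 'N(Zq).
  by apply: normal_norm; apply: sub_center_normal; apply: subsetIl.
have rcosJ : forall g x, g \in G -> (Zq :* x) :^ g = Zq :* (x ^ g).
  by move=> g x Gg; rewrite conjsMg conjg_set1 (normP (subsetP nZq g Gg)).
have YJ : forall g B, g \in G -> B \in Y -> B :^ g \in Y.
  move=> g B Gg /rcosetsP[x Sx ->]; rewrite rcosJ //.
  apply/rcosetsP; exists (x ^ g) => //.
  move: Sx; rewrite !mem_Sqpi => /and3P[Gx pix qx].
  by rewrite groupJ // p_eltJ pix classGidl.
have actY : [acts Q, on Y | 'Js].
  apply/actsP => g Qg B /=.
  have Gg := subsetP sQG g Qg.
  apply/idP/idP => [|]; last exact: YJ.
  by move/(YJ g^-1); rewrite conjsgK; apply; rewrite groupV.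
have fixY : 'Fix_(Y | 'Js)(Q) = rcosets Zq SC.
  apply/setP => B; rewrite in_setI; apply/andP/rcosetsP.
    case=> /rcosetsP[x Sx ->] /afixP fixB; exists x => //.
    rewrite in_setI Sx /=; apply/centP => g Qg.
    have Gg := subsetP sQG g Qg.
    have := fixB g Qg; rewrite /= rcosJ // => e.
    have : x ^ g \in Zq :* x by rewrite -e rcoset_refl.
    case/rcosetP => z Zqz exg.
    have qz : q.-elt z := mem_p_elt qZq Zqz.
    move: Sx; rewrite mem_Sqpi => /and3P[Gx _ qx].
    have z1 : z = 1.
      apply: (key qpr _ qz qx); first by case/setIP: Zqz.
      by rewrite -exg memJ_class.
    move: exg; rewrite z1 mul1g => exg.
    by rewrite /commute conjgC exg.
  case=> x /setIP[Sx Cx] ->; split; first by apply/rcosetsP; exists x.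
  apply/afixP => g Qg /=; rewrite rcosJ ?(subsetP sQG) //.
  by rewrite conj_central //; first [exact: (centP Cx) g Qg | apply/esym; exact: (centP Cx) g Qg].
have modY := pgroup_fix_mod qQ actY.
have cardY : (#|Y| = #|S|`_q^')%N.
  apply/eqP; rewrite -(eqn_pmul2l (cardG_gt0 Zq)) cardS /=.
  by rewrite cardZq heq partnC.
have nqY : ~~ (q %| #|Y|) by rewrite -p'natE // cardY part_pnat.
have nqF : ~~ (q %| #|rcosets Zq SC|).
  by move: nqY; rewrite -fixY /dvdn modY.
have dA : (#|'Z(Q) : Zq| %| #|rcosets Zq SC|)%N.
  have := cardSC; rewrite -cardSCq -(Lagrange sZqA) -mulnA => /eqP.
  rewrite eqn_pmul2l ?cardG_gt0 // => /eqP <-.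
  exact: dvdn_mulr.
have qA : q.-nat #|'Z(Q) : Zq|.
  apply: pnat_dvd (dvdn_indexg _ _) _.
  exact: pgroupS (center_sub Q) qQ.
have : #|'Z(Q) : Zq| == 1%N.
  case: (p_natP qA) dA => [[|k] ->] // dA.
  by case/negP: nqF; apply: dvdn_trans dA; rewrite expnS dvdn_mulr.
rewrite indexg_eq1 => sAZq.
exact: subset_trans sAZq (subsetIl _ _).
Qed.
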